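(* For every integer $k>1$ there exists $g\in[\mathbb{F}_2,\mathbb{F}_2]$ such that $g\in G_{k-1}$ with $\varphi_j(g)=0$ for all $j<k$ and $\varphi_k(g)=-1$, and such that $g\in H_j$ with $\psi_j(g)=0$ for all $j\ge1$.
   Context: $\mathbb{F}_2$ is the free group on $x,y$. Let $\tilde K$ be the graph with vertex set $\mathbb{Z}^2$ and oriented edges $x^iy^jX$ from $(i,j)$ to $(i+1,j)$ and $x^iy^jY$ from $(i,j)$ to $(i,j+1)$. A $1$-chain is written $\alpha=P_\alpha(x,y)X+Q_\alpha(x,y)Y$ with $P_\alpha,Q_\alpha$ integer Laurent polynomials (coefficient of $x^iy^j$ in $P_\alpha$ = coefficient of edge $x^iy^jX$, similarly for $Q_\alpha$). For $g\in[\mathbb{F}_2,\mathbb{F}_2]$ written as a word in $x^{\pm1},y^{\pm1}$, the cycle $\alpha_g$ is the $1$-cycle traced by the lattice path from $(0,0)$ in which $x,x^{-1},y,y^{-1}$ move by $(1,0),(-1,0),(0,1),(0,-1)$ along the corresponding edges, each edge counted with sign $+1$ if traversed in its orientation and $-1$ otherwise; its homology class depends only on $g$. Put $f_g(y)=P_{\alpha_g}(1,y)$ and $g_g(x)=Q_{\alpha_g}(x,1)$. Set $G_0=H_0=[\mathbb{F}_2,\mathbb{F}_2]$ and inductively, for $k\ge1$, $\varphi_k(g)=f_g^{(k)}(1)/k!$ for $g\in G_{k-1}$, $\psi_k(g)=g_g^{(k)}(1)/k!$ for $g\in H_{k-1}$, $G_k=\ker\varphi_k$, $H_k=\ker\psi_k$.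 *)

(* Defs.v *)
From mathcomp Require Import all_boot all_order all_algebra.
Set Implicit Arguments. Unset Strict Implicit. Unset Printing Implicit Defensive.
Import Order.TTheory GRing.Theory Num.Theory.
Local Open Scope ring_scope.

(* Letters of words in x^{±1}, y^{±1}: Lx = x, LX = x^-1, Ly = y, LY = y^-1. *)
Inductive letter := Lx | LX | Ly | LY.

(* a word w represents an element of F_2; it is reduced iff no letter is
   immediately followed by its inverse.  Reduced words = elements of F_2. *)
Definition inv_pair (a b : letter) : bool :=
  match a, b with
  | Lx, LX | LX, Lx | Ly, LY | LY, Ly => true
  | _, _ => false
  end.

Fixpoint reduced (w : seq letter) : bool :=
  match w with
  | a :: ((b :: _) as w') => ~~ inv_pair a b && reduced w'
  | _ => true
  end.

Definition expx (w : seq letter) : int :=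
  \sum_(a <- w) (match a with Lx => 1 | LX => -1 | _ => 0 end).
Definition expy (w : seq letter) : int :=
  \sum_(a <- w) (match a with Ly => 1 | LY => -1 | _ => 0 end).

(* g in [F_2,F_2]  <=>  g lies in the kernel of the abelianization
   F_2 -> Z^2, i.e. both exponent sums vanish. *)
Definition in_comm (w : seq letter) : Prop := expx w = 0 /\ expy w = 0.

(* An edge of K~ : (is_X_edge, base vertex (i,j)).  The edge (true,(i,j)) is
   x^i y^j X from (i,j) to (i+1,j); (false,(i,j)) is x^i y^j Y. *)
(* The lattice path from p along w, as the list of traversed edges, each with
   its sign (+1 if traversed along its orientation, -1 otherwise). *)
Fixpoint path_edges (p : int * int) (w : seq letter)
  : seq ((bool * (int * int)) * int) :=
  match w with
  | [::] => [::]
  | a :: w' =>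
    match a with
    | Lx => ((true, p), 1) :: path_edges (p.1 + 1, p.2) w'
    | LX => ((true, (p.1 - 1, p.2)), -1) :: path_edges (p.1 - 1, p.2) w'
    | Ly => ((false, p), 1) :: path_edges (p.1, p.2 + 1) w'
    | LY => ((false, (p.1, p.2 - 1)), -1) :: path_edges (p.1, p.2 - 1) w'
    end
  end.

(* The 1-cycle alpha_g: coefficients of P_alpha (X-edges) and Q_alpha (Y-edges). *)
Definition coefP (w : seq letter) (i j : int) : int :=
  \sum_(e <- path_edges (0, 0) w | e.1.1 && (e.1.2 == (i, j))) e.2.
Definition coefQ (w : seq letter) (i j : int) : int :=
  \sum_(e <- path_edges (0, 0) w | ~~ e.1.1 && (e.1.2 == (i, j))) e.2.

(* A one-variable integer Laurent polynomial given as a finite formal sum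
   \sum_t c_t z^{n_t}, encoded as the list of pairs (c_t, n_t). *)
Definition laurent := seq (int * int).

(* falling factorial n (n-1) ... (n-k+1): d^k/dz^k z^n = ff n k * z^(n-k). *)
Definition ff (n : int) (k : nat) : int := \prod_(i < k) (n - (i : nat)%:Z).

Definition taylor1 (f : laurent) (k : nat) : rat :=
  (\sum_(t <- f) (t.1 * ff t.2 k)%:~R) / (k`!)%:R.

(* f_g(y) = P_{alpha_g}(1, y) = \sum_{X-edges x^i y^j X} (sign) y^j *)
Definition f_g (w : seq letter) : laurent :=
  [seq (e.2, e.1.2.2) | e <- path_edges (0, 0) w & e.1.1].
(* g_g(x) = Q_{alpha_g}(x, 1) = \sum_{Y-edges x^i y^j Y} (sign) x^i *)
Definition g_g (w : seq letter) : laurent :=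
  [seq (e.2, e.1.2.1) | e <- path_edges (0, 0) w & ~~ e.1.1].

Definition phi (k : nat) (w : seq letter) : rat := taylor1 (f_g w) k.
Definition psi (k : nat) (w : seq letter) : rat := taylor1 (g_g w) k.

Fixpoint inG (k : nat) (w : seq letter) : Prop :=
  match k with
  | 0 => in_comm w
  | k'.+1 => inG k' w /\ phi k w = 0
  end.
Fixpoint inH (k : nat) (w : seq letter) : Prop :=
  match k with
  | 0 => in_comm w
  | k'.+1 => inH k' w /\ psi k w = 0
  end.

(* Main.v *)
Require Import Defs.
From mathcomp Require Import all_boot all_order all_algebra.
From mathcomp Require Import ring.
Import GRing.Theory Num.Theory.
Local Open Scope ring_scope.
Local Notation inv_pair := Defs.inv_pair.

Definition invl a := match a with Lx => LX | LX => Lx | Ly => LY | LY => Ly end.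
Definition invw w := rev (map invl w).
Definition cw g := Lx :: Ly :: g ++ LY :: invw g ++ [:: LX].
Fixpoint W n := match n with 0%N => [:: Ly; LX; LY; Lx] | n'.+1 => cw (W n') end.

Definition ex a : int := match a with Lx => 1 | LX => -1 | _ => 0 end.
Definition ey a : int := match a with Ly => 1 | LY => -1 | _ => 0 end.

Lemma expx_cons a w : expx (a :: w) = ex a + expx w.
Proof. by rewrite /expx big_cons. Qed.
Lemma expy_cons a w : expy (a :: w) = ey a + expy w.
Proof. by rewrite /expy big_cons. Qed.
Lemma expx_cat w1 w2 : expx (w1 ++ w2) = expx w1 + expx w2.
Proof. by rewrite /expx big_cat. Qed.
Lemma expy_cat w1 w2 : expy (w1 ++ w2) = expy w1 + expy w2.
Proof. by rewrite /expy big_cat. Qed.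
Lemma expx_inv w : expx (invw w) = - expx w.
Proof.
rewrite /expx /invw big_rev big_map -sumrN; apply: eq_bigr => -[] _ //=.
Qed.
Lemma expy_inv w : expy (invw w) = - expy w.
Proof.
rewrite /expy /invw big_rev big_map -sumrN; apply: eq_bigr => -[] _ //=.
Qed.
Lemma expx_nil : expx [::] = 0. Proof. by rewrite /expx big_nil. Qed.
Lemma expy_nil : expy [::] = 0. Proof. by rewrite /expy big_nil. Qed.

Lemma W_comm n : expx (W n) = 0 /\ expy (W n) = 0.
Proof.
elim: n => [|n [IHx IHy]].
  by rewrite /= !expx_cons !expy_cons expx_nil expy_nil.
rewrite /= /cw !(expx_cons, expy_cons, expx_cat, expy_cat, expx_inv, expy_inv, expx_nil, expy_nil) IHx IHy /=.
split; ring.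
Qed.

Definition ok_join (s1 s2 : seq letter) :=
  match s2 with [::] => true | b :: _ => ~~ inv_pair (last b s1) b end.

Lemma inv_pair_sym a b : inv_pair a b = inv_pair b a.
Proof. by case: a; case: b. Qed.
Lemma inv_pair_refl a : inv_pair a a = false.
Proof. by case: a. Qed.

Lemma rc2 a c s : reduced (a :: c :: s) = ~~ inv_pair a c && reduced (c :: s).
Proof. by []. Qed.

Lemma reduced_cat s1 s2 :
  reduced (s1 ++ s2) = [&& reduced s1, reduced s2 & ok_join s1 s2].
Proof.
elim: s1 => [|a s1 IH].
  by case: s2 => [|b s2] //=; rewrite inv_pair_refl andbT.
case: s1 IH => [|c s1] IH.
  by case: s2 {IH} => [|b s2] //=; rewrite andbC.
have -> : (a :: c :: s1) ++ s2 = a :: c :: (s1 ++ s2) by [].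
rewrite rc2 -cat_cons IH rc2 -!andbA; congr (_ && _).
Qed.

Lemma reduced_cons a s :
  reduced (a :: s) = reduced s && (if s is b :: _ then ~~ inv_pair a b else true).
Proof. by case: s => [|b s] //=; rewrite andbC. Qed.

Lemma reduced_rev s : reduced (rev s) = reduced s.
Proof.
elim: s => [|a s IH] //.
rewrite rev_cons -cats1 reduced_cat IH /=.
case: s {IH} => [|b s] /=; first by rewrite inv_pair_refl.
by rewrite rev_cons last_rcons inv_pair_sym andbC.
Qed.

Lemma reduced_map s : reduced (map invl s) = reduced s.
Proof.
elim: s => [|a s IH] //.
rewrite map_cons !reduced_cons IH; congr (_ && _).
by case: s {IH} => [|b s] //=; case: a; case: b.
Qed.

Lemma reduced_invw s : reduced (invw s) = reduced s.
Proof. by rewrite /invw reduced_rev reduced_map. Qed.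

Definition hok a := match a with Lx | Ly => true | _ => false end.
Definition lok a := match a with Lx | LX => true | _ => false end.

Definition good g := reduced g /\ exists a s b s',
  g = a :: s /\ g = rcons s' b /\ hok a /\ lok b.

Lemma good_cw g : good g -> good (cw g).
Proof.
move=> [rg [a [s [b [s' [E1 [E2 [ha lb]]]]]]]].
split; last first.
  exists Lx, (Ly :: g ++ LY :: invw g ++ [:: LX]), LX, (Lx :: Ly :: g ++ LY :: invw g).
  split => //; split => //. by rewrite /cw -cats1 /= -catA.
have Hi1 : invw g = invl b :: invw s' by rewrite E2 /invw map_rcons rev_rcons.
have Hi2 : invw g = rcons (invw s) (invl a) by rewrite E1 /invw map_cons rev_cons.
have h1 : ok_join [:: Lx; Ly] (g ++ LY :: invw g ++ [:: LX]) by rewrite E1; case: (a) ha.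
have h2 : ok_join g (LY :: invw g ++ [:: LX]) by rewrite /= {1}E2 last_rcons; case: (b) lb.
have h3 : ok_join [:: LY] (invw g ++ [:: LX]) by rewrite Hi1; case: (b) lb.
have h4 : ok_join (invw g) [:: LX] by rewrite /= Hi2 last_rcons; case: (a) ha.
rewrite /cw -[Lx :: Ly :: _]/([:: Lx; Ly] ++ _) reduced_cat h1 reduced_cat h2 rg.
rewrite -[LY :: _]/([:: LY] ++ _) reduced_cat h3 reduced_cat h4 reduced_invw rg.
by [].
Qed.

Lemma good_W n : good (W n).
Proof.
elim: n => [|n IH]; last exact: good_cw.
split => //. by exists Ly, [:: LX; LY; Lx], Lx, [:: Ly; LX; LY].
Qed.

Definition edge := ((bool * (int * int)) * int)%type.
Definition sh (a b : int) (e : edge) : edge := ((e.1.1, (e.1.2.1 + a, e.1.2.2 + b)), e.2).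
Definition negE (e : edge) : edge := (e.1, - e.2).

Lemma path_sh (p : int * int) a b w :
  path_edges (p.1 + a, p.2 + b) w = map (sh a b) (path_edges p w).
Proof.
elim: w p => [|c w IH] [p1 p2] //=.
case: c => /=.
- by rewrite -IH /sh /= addrAC.
- by rewrite -IH /sh /= addrAC.
- by rewrite -IH /sh /= addrAC.
- by rewrite -IH /sh /= addrAC.
Qed.

Lemma path_cat (p : int * int) w1 w2 :
  path_edges p (w1 ++ w2) =
  path_edges p w1 ++ path_edges (p.1 + expx w1, p.2 + expy w1) w2.
Proof.
elim: w1 p => [|c w IH] [p1 p2] /=.
  by rewrite expx_nil expy_nil !addr0.
rewrite expx_cons expy_cons.
case: c => /=; rewrite IH /= ?addr0 ?add0r !addrA //.
Qed.

Lemma path_inv (p : int * int) w :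
  path_edges (p.1 + expx w, p.2 + expy w) (invw w) = rev (map negE (path_edges p w)).
Proof.
elim: w p => [|c w IH] [p1 p2] /=.
  by [].
rewrite expx_cons expy_cons /invw map_cons rev_cons -cats1 -/(invw w).
rewrite path_cat expx_inv expy_inv.
case: c => /=; rewrite rev_cons -cats1 -IH /negE /=;
  (congr (path_edges (_, _) _ ++ [:: ((_, (_, _)), _)]); ring).
Qed.

Lemma path_cw g : expx g = 0 -> expy g = 0 ->
  path_edges (0,0) (cw g) =
  ((true,(0,0)),1) :: ((false,(1,0)),1) :: map (sh 1 1) (path_edges (0,0) g) ++
  ((false,(1,0)),-1) :: rev (map negE (map (sh 1 0) (path_edges (0,0) g)))
  ++ [:: ((true,(0,0)),-1)].
Proof.
move=> hx hy.
rewrite /cw /= path_cat hx hy /= path_cat expx_inv expy_inv hx hy /=.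
rewrite -!(path_sh (0,0)) -(path_inv ((0,0).1+1, (0,0).2+0)) hx hy /=.
by rewrite !(addr0, add0r, subr0, subrr).
Qed.

Definition Af (E : seq edge) j : int := \sum_(e <- E | e.1.1) e.2 * ff e.1.2.2 j.
Definition Bf (E : seq edge) j : int := \sum_(e <- E | ~~ e.1.1) e.2 * ff e.1.2.1 j.

Lemma phiA j w : phi j w = (Af (path_edges (0,0) w) j)%:~R / (j`!)%:R.
Proof.
by rewrite /phi /taylor1 /f_g /Af big_map big_filter rmorph_sum.
Qed.
Lemma psiB j w : psi j w = (Bf (path_edges (0,0) w) j)%:~R / (j`!)%:R.
Proof.
by rewrite /psi /taylor1 /g_g /Bf big_map big_filter rmorph_sum.
Qed.

Lemma ff0 n : ff n 0 = 1.
Proof. by rewrite /ff big_ord0. Qed.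

Lemma ff_pascal n j : ff (n + 1) j.+1 = ff n j.+1 + (j.+1)%:Z * ff n j.
Proof.
have e1 : ff n j.+1 = ff n j * (n - j%:Z) by rewrite /ff big_ord_recr.
have e2 : ff (n + 1) j.+1 = (n + 1) * ff n j.
  rewrite /ff big_ord_recl /= subr0; congr (_ * _).
  by apply: eq_bigr => i _; rewrite /bump leq0n add1n intS; ring.
rewrite e2 [X in _ = X + _]e1 intS; ring.
Qed.

Lemma Af_cons e E j : Af (e :: E) j = (if e.1.1 then e.2 * ff e.1.2.2 j else 0) + Af E j.
Proof. by rewrite /Af big_cons; case: (e.1.1) => /=; rewrite ?add0r. Qed.
Lemma Bf_cons e E j : Bf (e :: E) j = (if ~~ e.1.1 then e.2 * ff e.1.2.1 j else 0) + Bf E j.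
Proof. by rewrite /Bf big_cons; case: (e.1.1) => /=; rewrite ?add0r. Qed.
Lemma Af_cat E1 E2 j : Af (E1 ++ E2) j = Af E1 j + Af E2 j.
Proof. by rewrite /Af big_cat. Qed.
Lemma Bf_cat E1 E2 j : Bf (E1 ++ E2) j = Bf E1 j + Bf E2 j.
Proof. by rewrite /Bf big_cat. Qed.
Lemma Af_rev E j : Af (rev E) j = Af E j.
Proof. by rewrite /Af big_rev. Qed.
Lemma Bf_rev E j : Bf (rev E) j = Bf E j.
Proof. by rewrite /Bf big_rev. Qed.
Lemma Af_neg E j : Af (map negE E) j = - Af E j.
Proof. by rewrite /Af big_map -sumrN; apply: eq_bigr => e _; rewrite mulNr. Qed.
Lemma Bf_neg E j : Bf (map negE E) j = - Bf E j.
Proof. by rewrite /Bf big_map -sumrN; apply: eq_bigr => e _; rewrite mulNr. Qed.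
Lemma Af_nil j : Af [::] j = 0. Proof. by rewrite /Af big_nil. Qed.
Lemma Bf_nil j : Bf [::] j = 0. Proof. by rewrite /Bf big_nil. Qed.
Lemma Af_sh0 a E j : Af (map (sh a 0) E) j = Af E j.
Proof. by rewrite /Af big_map; apply: eq_bigr => e _; rewrite /sh /= addr0. Qed.
Lemma Af_sh1 a E j : Af (map (sh a 1) E) j.+1 = Af E j.+1 + (j.+1)%:Z * Af E j.
Proof.
rewrite /Af big_map mulr_sumr -big_split; apply: eq_bigr => e _.
by rewrite /sh /= ff_pascal; ring.
Qed.
Lemma Af_sh1_0 a E : Af (map (sh a 1) E) 0 = Af E 0.
Proof. by rewrite /Af big_map; apply: eq_bigr => e _; rewrite /sh /= !ff0. Qed.
Lemma Bf_sh a b E j : Bf (map (sh a b) E) j = Bf (map (sh a 0) E) j.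
Proof. by rewrite /Bf !big_map. Qed.

Lemma Af_cw g j : expx g = 0 -> expy g = 0 ->
  Af (path_edges (0,0) (cw g)) j =
  Af (map (sh 1 1) (path_edges (0,0) g)) j - Af (map (sh 1 0) (path_edges (0,0) g)) j.
Proof.
move=> hx hy; rewrite path_cw //.
rewrite !(Af_cons, Af_cat, Af_rev, Af_neg, Af_nil) /=; ring.
Qed.
Lemma Bf_cw g j : expx g = 0 -> expy g = 0 ->
  Bf (path_edges (0,0) (cw g)) j = 0.
Proof.
move=> hx hy; rewrite path_cw //.
rewrite !(Bf_cons, Bf_cat, Bf_rev, Bf_neg, Bf_nil) /= (Bf_sh 1 1); ring.
Qed.

Lemma phi0_W n : phi 0 (W n) = 0.
Proof.
case: n => [|n].
  rewrite phiA /=. rewrite !(Af_cons, Af_nil) /= !ff0. by [].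
have [hx hy] := W_comm n.
by rewrite phiA /= Af_cw // Af_sh1_0 Af_sh0 subrr.
Qed.

Lemma phiS_W n j : phi j.+1 (W n.+1) = phi j (W n).
Proof.
have [hx hy] := W_comm n.
rewrite !phiA /= Af_cw // Af_sh1 Af_sh0 addrC addKr factS natrM.
rewrite intrM /=.
have h1 : (j.+1%:R : rat) != 0 by rewrite pnatr_eq0.
have h2 : ((j`!)%:R : rat) != 0 by rewrite pnatr_eq0 -lt0n fact_gt0.
rewrite -[(j.+1 : int)%:~R]/((j.+1)%:R). 
field. by rewrite h2 addrC natr1 h1.
Qed.

Lemma phi1_W0 : phi 1 (W 0) = -1.
Proof.
rewrite phiA /= !(Af_cons, Af_nil) /= /ff !big_ord_recl !big_ord0 /=.
by rewrite !(add0r, addr0, subr0, subrr, mulr1, mul1r, mulr0, mul0r, addrK).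
Qed.

Lemma psi_W n j : psi j (W n.+1) = 0.
Proof.
have [hx hy] := W_comm n.
by rewrite psiB /= Bf_cw // mul0r.
Qed.

Lemma W_phi n : (forall j, (j <= n)%N -> phi j (W n) = 0) /\ phi n.+1 (W n) = -1.
Proof.
elim: n => [|n [IH1 IH2]].
  split; last exact: phi1_W0.
  by case=> // _; exact: phi0_W.
split; last by rewrite phiS_W.
by case=> [|j] hj; [exact: phi0_W | rewrite phiS_W IH1].
Qed.

Lemma W_inG n m : (m <= n)%N -> inG m (W n).
Proof.
elim: m => [|m IH] hm /=; first exact: W_comm.
split; first by apply: IH; apply: ltnW.
by have [h _] := W_phi n; apply: h.
Qed.

Lemma W_inH n j : inH j (W n.+1).
Proof.
elim: j => [|j IH] /=; first exact: (W_comm n.+1).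
by split => //; apply: psi_W.
Qed.

Theorem proposition4p1 :
  forall k : nat, (1 < k)%N ->
  exists g : seq letter,
    reduced g /\ in_comm g /\
    inG k.-1 g /\ (forall j : nat, (1 <= j < k)%N -> phi j g = 0) /\
    phi k g = -1 /\
    (forall j : nat, (1 <= j)%N -> inH j g /\ psi j g = 0).
Proof.
case=> [|[|n]] // _.
exists (W n.+1); split; first by have [] := good_W n.+1.
split; first by have [? ?] := W_comm n.+1.
split; first exact: W_inG.
have [h1 h2] := W_phi n.+1.
split; first by move=> j /andP [_ hj]; apply: h1.
split; first exact: h2.
by move=> j _; split; [exact: W_inH | exact: psi_W].
Qed.
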